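(* Let $U$ be a finite nonempty set, $R$ an equivalence relation on $U$, and $M(R)$ the support matroid induced by $R$. For every $X\subseteq U$, $X$ is a closed set of $M(R)$ if and only if $R^{*}(X)=R_{*}(X)$.
   Context: For $x\in U$, $RN(x)=\{y\in U\mid xRy\}$; $R_{*}(X)=\{x\in U\mid RN(x)\subseteq X\}$ and $R^{*}(X)=\{x\in U\mid RN(x)\cap X\neq\emptyset\}$. Let $\mathbf{S}(R)=\{X\subseteq U\mid R^{*}(X)=U\}$. The support matroid $M(R)=(U,\mathbf{I}(R))$ is the matroid on $U$ whose independent sets $\mathbf{I}(R)$ are the subsets of inclusion-minimal members of $\mathbf{S}(R)$. For a matroid $(U,\mathbf{I})$, the rank is $r(X)=\max\{|I|\mid I\subseteq X, I\in\mathbf{I}\}$, the closure is $cl(X)=\{e\in U\mid r(X)=r(X\cup\{e\})\}$, and $X$ is closed if $cl(X)=X$. *)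

(* Defs.v *)
From mathcomp Require Import all_boot.
Set Implicit Arguments. Unset Strict Implicit. Unset Printing Implicit Defensive.

Section Support.
Variables (U : finType) (R : rel U).

Definition RN (x : U) : {set U} := [set y | R x y].
Definition lowerA (X : {set U}) : {set U} := [set x | RN x \subset X].
Definition upperA (X : {set U}) : {set U} := [set x | RN x :&: X != set0].
Definition supports : {set {set U}} := [set X | upperA X == [set: U]].
Definition indep (I : {set U}) : bool :=
  [exists Y : {set U}, minset (fun Z : {set U} => Z \in supports) Y && (I \subset Y)].
Definition mrank (X : {set U}) : nat :=
  \max_(I : {set U} | indep I && (I \subset X)) #|I|.
Definition mcl (X : {set U}) : {set U} := [set e | mrank X == mrank (e |: X)].
Definition mclosed (X : {set U}) : bool := mcl X == X.

End Support.

(* Main.v *)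
Require Import Defs.
From mathcomp Require Import all_boot.

Section S.
Variables (U : finType) (R : rel U).
Hypotheses (Rrefl : reflexive R) (Rsym : symmetric R) (Rtrans : transitive R).

Definition pt (I : {set U}) := forall x y, x \in I -> y \in I -> R x y -> x = y.

Lemma upperP (X : {set U}) x : reflect (exists2 y, y \in X & R x y) (x \in upperA R X).
Proof.
rewrite inE; apply: (iffP (set0Pn _)).
  by case=> y; rewrite !inE => /andP[Ry Xy]; exists y.
by case=> y Xy Ry; exists y; rewrite !inE Ry.
Qed.

Lemma supportP (Y : {set U}) : reflect (forall u, exists2 y, y \in Y & R u y) (Y \in supports R).
Proof.
rewrite inE; apply: (iffP eqP) => [H u|H].
  by apply/upperP; rewrite H in_setT.
by apply/setP=> u; rewrite in_setT; apply/upperP.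
Qed.

Lemma minset_pt (Y : {set U}) : minset (fun Z => Z \in supports R) Y -> pt Y.
Proof.
case/minsetP=> SY minY x y Hx Hy Rxy; apply/eqP; apply/negPn/negP=> nxy.
have : Y :\ y = Y.
  apply: minY; last exact: subsetDl.
  apply/supportP=> u; have [z Hz Ruz] := (supportP _ SY) u.
  case: (eqVneq z y) => [ezy|nzy].
    subst z; exists x; first by rewrite !inE nxy.
    by apply: Rtrans Ruz _; rewrite Rsym.
  by exists z; rewrite // !inE nzy.
by move/setP/(_ y); rewrite !inE eqxx Hy.
Qed.

Definition rep x := odflt x [pick y | R x y].

Lemma rep_R x : R x (rep x).
Proof. rewrite /rep; case: pickP => [y //|/(_ x)]; by rewrite Rrefl. Qed.

Lemma rep_eq x y : R x y -> rep x = rep y.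
Proof.
move=> Rxy; rewrite /rep (@eq_pick _ (fun z => R x z) (fun z => R y z)) //.
  case: pickP => [//|/(_ y)]; by rewrite Rrefl.
move=> z /=; apply/idP/idP => H.
  by apply: Rtrans H; rewrite Rsym.
exact: Rtrans H.
Qed.

Lemma indepP (I : {set U}) : reflect (pt I) (indep R I).
Proof.
apply: (iffP existsP).
  case=> Y /andP[mY sIY] x y Hx Hy; exact: (@minset_pt Y mY x y (subsetP sIY _ Hx) (subsetP sIY _ Hy)).
move=> ptI.
pose Y := I :|: [set x | (RN R x :&: I == set0) && (rep x == x)].
have disj x y : RN R x :&: I == set0 -> y \in I -> R x y -> False.
  by move=> /eqP/setP/(_ y); rewrite !inE => H Iy Rxy; rewrite Rxy Iy in H.
have ptY : pt Y.
  move=> x y; rewrite !inE => /orP[Ix|/andP[Dx /eqP rx]] /orP[Iy|/andP[Dy /eqP ry]] Rxy.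
  - exact: ptI.
  - by case: (disj y x Dy Ix); rewrite Rsym.
  - by case: (disj x y Dx Iy).
  - by rewrite -rx -ry; apply: rep_eq.
exists Y; apply/andP; split; last exact: subsetUl.
apply/minsetP; split.
  apply/supportP=> u.
  case: (eqVneq (RN R u :&: I) set0) => [/eqP Du|/set0Pn [y]]; last first.
    by rewrite !inE => /andP[Ry Iy]; exists y; rewrite ?inE ?Iy.
  exists (rep u); last exact: rep_R.
  rewrite !inE; apply/orP; right; apply/andP; split.
    apply/eqP/setP => z; rewrite !inE; apply/negP => /andP[Rz Iz].
    apply: (disj u z Du Iz); exact: Rtrans (rep_R u) Rz.
  by rewrite -(@rep_eq u _ (rep_R u)).
move=> B /supportP SB sBY; apply/eqP; rewrite eqEsubset sBY /=.
apply/subsetP=> y Yy; have [z Bz Ryz] := SB y.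
by rewrite (ptY y z Yy (subsetP sBY z Bz) Ryz).
Qed.

Lemma mrank_mono (X Y : {set U}) : X \subset Y -> mrank R X <= mrank R Y.
Proof.
move=> sXY; apply/bigmax_leqP => I /andP[iI sI].
by apply: leq_bigmax_cond; rewrite iI (subset_trans sI sXY).
Qed.

Lemma mcl_upper (X : {set U}) : mcl R X = upperA R X.
Proof.
apply/setP=> e; rewrite inE.
case: (upperP X e) => [[x Xx Rex]|nU].
  apply/eqP/anti_leq/andP; split; first exact: mrank_mono (subsetUr _ _).
  case Xe: (e \in X); first by rewrite (setUidPr _) ?sub1set.
  apply/bigmax_leqP=> I /andP[/indepP ptI sI].
  case Ie: (e \in I).
    have xI : x \notin I.
      by apply/negP => Ix; move: (ptI e x Ie Ix Rex) => exx; rewrite exx Xx in Xe.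
    have nxe : x != e by apply/negP=> /eqP exe; rewrite -exe Xx in Xe.
    apply: leq_trans (leq_bigmax_cond (x |: (I :\ e)) _).
      by rewrite cardsU1 !inE negb_and xI orbT (cardsD1 e I) Ie.
    apply/andP; split.
      apply/indepP => a b; rewrite !inE => /orP[/eqP->|/andP[nae Ia]] /orP[/eqP->|/andP[nbe Ib]] Rab //.
      + have Reb : R e b by exact: Rtrans Rex Rab.
        by move: (ptI e b Ie Ib Reb) => eb; rewrite eb eqxx in nbe.
      + have Rea : R e a by apply: Rtrans Rex _; rewrite Rsym.
        by move: (ptI e a Ie Ia Rea) => ea; rewrite ea eqxx in nae.
      + exact: ptI.
    apply/subsetP=> z; rewrite !inE => /orP[/eqP->//|/andP[nze Iz]].
    by move: (subsetP sI z Iz); rewrite !inE (negbTE nze).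
  apply: leq_bigmax_cond; apply/andP; split; first exact/indepP.
  apply/subsetP=> z Iz; move: (subsetP sI z Iz); rewrite !inE.
  by case/orP=> // /eqP ze; rewrite ze Ie in Iz.
have ne : 0 < #|[pred I : {set U} | indep R I && (I \subset X)]|.
  apply/card_gt0P; exists set0; rewrite inE /= sub0set andbT; apply/indepP => a b; by rewrite inE.
have [I0 HI0 Heq] := @eq_bigmax_cond _ [pred I : {set U} | indep R I && (I \subset X)] (fun I => #|I|) ne.
have eX : e \notin X by apply/negP=> Xe; apply: nU; exists e.
move: HI0; rewrite inE => /andP[/indepP ptI sI]; set I := I0 in Heq ptI sI * .
have eI : e \notin I by apply: contra eX; exact: (subsetP sI).
apply/negbTE; rewrite neq_ltn; apply/orP; left.
rewrite /mrank.
change (\max_(I in [pred I | indep R I && (I \subset X)]) #|I| <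
        \max_(I0 | indep R I0 && (I0 \subset e |: X)) #|I0|).
rewrite Heq; apply: leq_trans (leq_bigmax_cond (e |: I) _); first by rewrite cardsU1 eI.
apply/andP; split; last by rewrite setUS.
apply/indepP=> a b; rewrite !inE => /orP[/eqP->|Ia] /orP[/eqP->|Ib] Rab //.
- by case: nU; exists b => //; exact: (subsetP sI).
- by case: nU; exists a; [exact: (subsetP sI) | rewrite Rsym].
- exact: ptI.
Qed.

End S.

Theorem corollary3 (U : finType) (u0 : U) (R : rel U)
  (Rrefl : reflexive R) (Rsym : symmetric R) (Rtrans : transitive R)
  (X : {set U}) :
  mclosed R X <-> upperA R X = lowerA R X.
Proof.
have lowX : lowerA R X \subset X.
  by apply/subsetP=> x; rewrite inE => /subsetP; apply; rewrite inE.
have Xup : X \subset upperA R X.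
  by apply/subsetP=> x Xx; apply/upperP; exists x.
rewrite /mclosed mcl_upper //; split.
  move/eqP=> H; apply/eqP; rewrite eqEsubset H lowX andbT.
  apply/subsetP=> x Xx; rewrite inE; apply/subsetP=> y; rewrite inE => Rxy.
  by rewrite -H; apply/upperP; exists x; rewrite // Rsym.
move=> H; apply/eqP; apply/eqP; rewrite eqEsubset Xup andbT; by rewrite H.
Qed.
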